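(* Let $B$ be a C*-algebra and let $A$ be a regular subalgebra of $B$ satisfying the ideal intersection property. Let $\mathscr{R}(B)$ be the family of all regular ideals of $B$, and $\mathscr{R}'_{\mathrm{inv}}(A)$ the family of all regular, normalizer-invariant ideals of $A$. Then the map $$\alpha: J\in\mathscr{R}(B)\mapsto J\cap A\in\mathscr{R}'_{\mathrm{inv}}(A)$$ is well defined and is a boolean algebra isomorphism (an inclusion-preserving bijection with inclusion-preserving inverse), with inverse $$\beta: I\in\mathscr{R}'_{\mathrm{inv}}(A)\mapsto \mathrm{Ann}_B(\mathrm{Ann}_B(I))\in\mathscr{R}(B).$$
   Context: Ideals are closed two-sided ideals. $A\subseteq B$ is a closed *-subalgebra. A normalizer of $A$ in $B$ is $n\in B$ with $n^*An\subseteq A$ and $nAn^*\subseteq A$; $A$ is a regular subalgebra if the normalizers span a dense subspace of $B$ and $A$ contains an approximate unit for $B$. A subset $S\subseteq A$ is normalizer-invariant if $nSn^*\subseteq S$ for every normalizer $n$. For a C*-algebra $C$ and $S\subseteq C$ with $[SC]=[CS]$ ($[\cdot]$ = closed linear span), $\{x\in C: xs=0\ \forall s\in S\}=\{x\in C: sx=0\ \forall s\in S\}$, denoted $\mathrm{Ann}_C(S)$; this applies in particular to every ideal of $C$, and (for $C=B$) to every normalizer-invariant ideal of $A$. An ideal $J$ of $C$ is regular if $\mathrm{Ann}_C(\mathrm{Ann}_C(J))=J$. Regular ideals form a boolean algebra ordered by inclusion, with meet $J_1\cap J_2$, join $\mathrm{Ann}_C(\mathrm{Ann}_C(J_1+J_2))$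 and negation $\mathrm{Ann}_C(J)$. $A$ satisfies the ideal intersection property if $J\cap A\neq\{0\}$ for every nonzero ideal $J$ of $B$. *)

(* Defs.v *)
(* C*-algebras are set up by hand: a C*-algebra is a complete normed space B
   over the complex field C := R[i] (R : realType) with a bilinear associative
   multiplication and a conjugate-linear anti-multiplicative involution
   satisfying submultiplicativity and the C*-identity (non-unital in general). *)
From HB Require Import structures.
From mathcomp Require Import all_boot all_order all_algebra.
From mathcomp Require Import all_classical all_reals all_analysis.
From mathcomp Require Import complex.
Set Implicit Arguments. Unset Strict Implicit. Unset Printing Implicit Defensive.
Import Order.TTheory GRing.Theory Num.Theory numFieldNormedType.Exports.
Local Open Scope ring_scope.
Local Open Scope classical_set_scope.

Record is_cstar_algebra (R : realType) (B : completeNormedModType R[i])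
    (mul : B -> B -> B) (star : B -> B) : Prop := IsCstarAlgebra {
  cs_mulDl : forall (a : R[i]) (x y z : B),
      mul (a *: x + y) z = a *: mul x z + mul y z;
  cs_mulDr : forall (a : R[i]) (x y z : B),
      mul x (a *: y + z) = a *: mul x y + mul x z;
  cs_mulA : forall x y z : B, mul x (mul y z) = mul (mul x y) z;
  cs_starK : forall x : B, star (star x) = x;
  cs_starD : forall x y : B, star (x + y) = star x + star y;
  cs_starZ : forall (a : R[i]) (x : B), star (a *: x) = (a^*)%R *: star x;
  cs_starM : forall x y : B, star (mul x y) = mul (star y) (star x);
  cs_norm_mul : forall x y : B, `|mul x y| <= `|x| * `|y|;
  cs_cstar_id : forall x : B, `|mul (star x) x| = `|x| ^+ 2
}.

Definition closed_subspace (R : realType) (B : completeNormedModType R[i])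
    (S : set B) : Prop :=
  closed S /\ S 0 /\ (forall x y, S x -> S y -> S (x + y)) /\
  (forall (a : R[i]) x, S x -> S (a *: x)).

Definition cstar_subalgebra (R : realType) (B : completeNormedModType R[i])
    (mul : B -> B -> B) (star : B -> B) (A : set B) : Prop :=
  closed_subspace A /\ (forall x y, A x -> A y -> A (mul x y)) /\
  (forall x, A x -> A (star x)).

Definition ideal_of (R : realType) (B : completeNormedModType R[i])
    (mul : B -> B -> B) (C J : set B) : Prop :=
  J `<=` C /\ closed_subspace J /\
  (forall c x, C c -> J x -> J (mul c x)) /\
  (forall c x, C c -> J x -> J (mul x c)).

Definition Ann (R : realType) (B : completeNormedModType R[i])
    (mul : B -> B -> B) (C S : set B) : set B :=
  [set x | C x /\ forall s, S s -> mul x s = 0].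

Definition regular_ideal (R : realType) (B : completeNormedModType R[i])
    (mul : B -> B -> B) (C J : set B) : Prop :=
  ideal_of mul C J /\ Ann mul C (Ann mul C J) = J.

Definition normalizer (R : realType) (B : completeNormedModType R[i])
    (mul : B -> B -> B) (star : B -> B) (A : set B) (n : B) : Prop :=
  forall a, A a -> A (mul (mul (star n) a) n) /\ A (mul (mul n a) (star n)).

Definition normalizer_invariant (R : realType) (B : completeNormedModType R[i])
    (mul : B -> B -> B) (star : B -> B) (A S : set B) : Prop :=
  forall n, normalizer mul star A n -> forall x, S x -> S (mul (mul n x) (star n)).

Definition lin_span (R : realType) (B : completeNormedModType R[i])
    (S : set B) : set B :=
  [set x | exists s : seq (R[i] * B),
      (forall p, p \in s -> S p.2) /\ x = \sum_(p <- s) p.1 *: p.2].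

Definition positive (R : realType) (B : completeNormedModType R[i])
    (mul : B -> B -> B) (star : B -> B) (x : B) : Prop :=
  exists y, x = mul (star y) y.

Definition contains_approx_unit (R : realType) (B : completeNormedModType R[i])
    (mul : B -> B -> B) (star : B -> B) (A : set B) : Prop :=
  exists (I : Type) (le : I -> I -> Prop) (e : I -> B),
    (exists i : I, True) /\
    (forall i, le i i) /\ (forall i j k, le i j -> le j k -> le i k) /\
    (forall i j, exists k, le i k /\ le j k) /\
    (forall i, A (e i) /\ positive mul star (e i) /\ `|e i| <= 1) /\
    (forall i j, le i j -> positive mul star (e j - e i)) /\
    (forall (b : B) (eps : R), 0 < eps -> exists i0, forall i, le i0 i ->
        `|mul (e i) b - b| < (eps%:C)%C /\ `|mul b (e i) - b| < (eps%:C)%C).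

Definition regular_subalgebra (R : realType) (B : completeNormedModType R[i])
    (mul : B -> B -> B) (star : B -> B) (A : set B) : Prop :=
  closure (lin_span (normalizer mul star A)) = setT /\
  contains_approx_unit mul star A.

Definition ideal_intersection_property (R : realType)
    (B : completeNormedModType R[i]) (mul : B -> B -> B) (A : set B) : Prop :=
  forall J, ideal_of mul setT J -> J <> [set 0] -> J `&` A <> [set 0].

(* Main.v *)
Require Import Defs.
From HB Require Import structures.
From mathcomp Require Import all_boot all_order all_algebra.
From mathcomp Require Import all_classical all_reals all_analysis.
From mathcomp Require Import complex.
Import Order.TTheory GRing.Theory Num.Theory numFieldNormedType.Exports.
Local Open Scope ring_scope.
Local Open Scope classical_set_scope.

Section CStar.
Variable R : realType.
Variable B : completeNormedModType R[i].
Variables (mul : B -> B -> B) (star : B -> B).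
Hypothesis HB : is_cstar_algebra mul star.

Lemma mulDl' x y z : mul (x + y) z = mul x z + mul y z.
Proof. by have := cs_mulDl HB 1 x y z; rewrite !scale1r. Qed.

Lemma mulDr' x y z : mul x (y + z) = mul x y + mul x z.
Proof. by have := cs_mulDr HB 1 x y z; rewrite !scale1r. Qed.

Lemma mul0l y : mul 0 y = 0.
Proof.
have h := mulDl' 0 0 y; rewrite addr0 in h.
by apply/(addrI (mul 0 y)); rewrite addr0 -h.
Qed.

Lemma mul0r y : mul y 0 = 0.
Proof.
have h := mulDr' y 0 0; rewrite addr0 in h.
by apply/(addrI (mul y 0)); rewrite addr0 -h.
Qed.

Lemma mulZl a x z : mul (a *: x) z = a *: mul x z.
Proof. by have := cs_mulDl HB a x 0 z; rewrite !addr0 mul0l addr0. Qed.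

Lemma mulZr a x z : mul x (a *: z) = a *: mul x z.
Proof. by have := cs_mulDr HB a x z 0; rewrite !addr0 mul0r addr0. Qed.

Lemma mulBl x y z : mul (x - y) z = mul x z - mul y z.
Proof. by rewrite -scaleN1r mulDl' mulZl scaleN1r. Qed.

Lemma mulBr x y z : mul x (y - z) = mul x y - mul x z.
Proof. by rewrite -scaleN1r mulDr' mulZr scaleN1r. Qed.

Lemma star0 : star 0 = 0.
Proof.
have h := cs_starD HB 0 0; rewrite addr0 in h.
by apply/(addrI (star 0)); rewrite addr0 -h.
Qed.

Lemma cstar0 x : mul (star x) x = 0 -> x = 0.
Proof.
move=> h; have := cs_cstar_id HB x; rewrite h normr0 => /eqP.
by rewrite eq_sym expf_eq0 /= normr_eq0 => /eqP.
Qed.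

Lemma closed_lip {f : B -> B} {K : R[i]} : 0 <= K ->
  (forall b c, `|f b - f c| <= K * `|b - c|) -> closed [set b | f b = 0].
Proof.
move=> K0 Hf t Ct /=; apply: contrapT => ft0.
have d0 : 0 < `|f t| by rewrite normr_gt0; apply/eqP.
have K10 : 0 < K + 1 by apply: ltr_wpDl.
set e := `|f t| / (K + 1).
have e0 : 0 < e by rewrite divr_gt0.
have [a [Sa ba]] := Ct _ (nbhsx_ballx t e e0).
rewrite -ball_normE /= in ba.
have h1 : `|f t| <= K * e.
  have := Hf t a; rewrite Sa subr0 => h; apply: (le_trans h).
  by apply: ler_wpM2l => //; apply: ltW.
have h2 : K * e < `|f t|.
  rewrite /e mulrA ltr_pdivrMr // mulrDr mulr1 mulrC ltrDl //.
by have := le_lt_trans h1 h2; rewrite ltxx.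
Qed.

Lemma closure_sub {S Z : set B} {t} : closure S t -> S `<=` Z -> closed Z -> Z t.
Proof. by move=> h sub cl; apply: cl; apply: (closureS sub h). Qed.

Lemma Ann_cs {C S : set B} : closed_subspace C -> closed_subspace (Ann mul C S).
Proof.
move=> [cC [C0 [CD CZ]]]; split; last split; last split.
- move=> t ht; split; first by apply: (closure_sub (Z := C) ht) => // x [].
  move=> s Ss; apply: (closure_sub (Z := [set b | mul b s = 0]) ht).
    by move=> x [_ Hx]; apply: Hx.
  apply: (closed_lip (K := `|s|)) => // b c.
  by rewrite -mulBl mulrC; apply: (cs_norm_mul HB).
- by split => // s _; rewrite mul0l.
- move=> x y [Cx Hx] [Cy Hy]; split; first by apply: CD.
  by move=> s Ss; rewrite mulDl' Hx // Hy // addr0.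
- move=> a x [Cx Hx]; split; first by apply: CZ.
  by move=> s Ss; rewrite mulZl Hx // scaler0.
Qed.

Lemma span_closure_sub {S N : set B} : closed_subspace S -> N `<=` S ->
  closure (lin_span N) `<=` S.
Proof.
move=> [cS [S0 [SD SZ]]] NS t ht; apply: (closure_sub (Z := S) ht _ cS).
move=> x [s [Hs ->]]; elim: s Hs => [|p s IH] Hs; first by rewrite big_nil.
rewrite big_cons; apply: SD.
  by apply: SZ; apply: NS; apply: Hs; rewrite in_cons eqxx.
by apply: IH => q hq; apply: Hs; rewrite in_cons hq orbT.
Qed.

Lemma setT_cs : closed_subspace [set: B].
Proof. by split; [apply: closedT | split]. Qed.

Lemma setT_sub : cstar_subalgebra mul star [set: B].
Proof. by split; [apply: setT_cs | split]. Qed.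

Lemma AnnB_right {A I : set B} : cstar_subalgebra mul star A ->
  closure (lin_span (normalizer mul star A)) = setT ->
  ideal_of mul A I -> normalizer_invariant mul star A I ->
  forall x b, (forall i, I i -> mul x i = 0) -> forall i, I i -> mul (mul x b) i = 0.
Proof.
move=> [_ [_ Astar]] Hden [IA [_ [_ Ir]]] Hinv x b Hx.
pose S := [set b | forall i, I i -> mul (mul x b) i = 0].
suff : S b by [].
apply: (span_closure_sub (N := normalizer mul star A)); last by rewrite Hden.
- split; last split; last split.
  + move=> t ht i Ii.
    apply: (closure_sub (Z := [set b | mul (mul x b) i = 0]) ht).
      by move=> y Sy; apply: Sy.
    apply: (closed_lip (K := `|x| * `|i|)).
      by rewrite mulr_ge0.
    move=> u v; rewrite -mulBl -mulBr.
    apply: (le_trans (cs_norm_mul HB _ _)).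
    rewrite mulrAC; apply: ler_wpM2r => //.
    exact: (cs_norm_mul HB).
  + by move=> i _; rewrite mul0r mul0l.
  + by move=> u v Su Sv i Ii; rewrite mulDr' mulDl' Su // Sv // addr0.
  + by move=> a u Su i Ii; rewrite mulZr mulZl Su // scaler0.
- move=> n Hn i Ii.
  have Hii : I (mul i (star i)) by apply: Ir => //; apply: Astar; apply: IA.
  have h2 := Hx _ (Hinv n Hn _ Hii).
  rewrite !(cs_mulA HB) in h2.
  set v := mul (mul x n) i.
  have : mul (star (star v)) (star v) = 0.
    by rewrite (cs_starK HB) /v !(cs_starM HB) !(cs_mulA HB) h2 mul0l.
  by move/cstar0 => sv0; rewrite -[v](cs_starK HB) sv0 star0.
Qed.

Lemma AnnB_ideal {A I : set B} : cstar_subalgebra mul star A ->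
  closure (lin_span (normalizer mul star A)) = setT ->
  ideal_of mul A I -> normalizer_invariant mul star A I ->
  ideal_of mul setT (Ann mul setT I).
Proof.
move=> HA Hden HI Hinv; split => //; split; first by apply: Ann_cs; apply: setT_cs.
split.
- move=> c x _ [_ Hx]; split => // s Ss.
  by rewrite -(cs_mulA HB) Hx // mul0r.
- move=> c x _ [_ Hx]; split => //.
  exact: (AnnB_right HA Hden HI Hinv x c Hx).
Qed.

Lemma inter_Ann_zero {C L : set B} {y} : L y -> Ann mul C L y ->
  L (mul (star y) y) -> y = 0.
Proof.
move=> Ly [_ Hy] Lh; apply: cstar0.
have h1 := Hy _ Lh.
apply: cstar0.
rewrite (cs_starM HB) (cs_starK HB) -(cs_mulA HB) h1 mul0r //.
Qed.

Lemma Sym {C L : set B} : cstar_subalgebra mul star C -> ideal_of mul C L ->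
  forall x, C x -> (forall l, L l -> mul x l = 0) -> forall l, L l -> mul l x = 0.
Proof.
move=> [_ [Cmul Cstar]] [LC [_ [Ll Lr]]] x Cx Hx l Ll'.
have Lw : L (mul l x) by apply: Lr.
apply: (inter_Ann_zero (C := C) Lw).
  split; first by apply: LC.
  by move=> s Ls; rewrite -(cs_mulA HB) Hx // mul0r.
apply: Ll => //; apply: Cstar; exact: LC.
Qed.

Lemma Ann_anti {C S1 S2 : set B} : S1 `<=` S2 -> Ann mul C S2 `<=` Ann mul C S1.
Proof. by move=> sub x [Cx Hx]; split => // s /sub; apply: Hx. Qed.

Lemma Ann_lideal_ideal {C L : set B} : cstar_subalgebra mul star C ->
  (forall c l, C c -> L l -> L (mul c l)) -> ideal_of mul C (Ann mul C L).
Proof.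
move=> [cC [Cmul Cstar]] Ll; split; first by move=> x [].
split; first exact: Ann_cs.
split.
- move=> c x Cc [Cx Hx]; split; first exact: Cmul.
  by move=> s Ls; rewrite -(cs_mulA HB) Hx // mul0r.
- move=> c x Cc [Cx Hx]; split; first exact: Cmul.
  by move=> s Ls; rewrite -(cs_mulA HB) Hx //; apply: Ll.
Qed.

Lemma Ann3 {C L : set B} : cstar_subalgebra mul star C -> ideal_of mul C L ->
  Ann mul C (Ann mul C (Ann mul C L)) = Ann mul C L.
Proof.
move=> HC HL.
have HM : ideal_of mul C (Ann mul C L).
  by apply: Ann_lideal_ideal => //; case: HL => _ [_ []].
apply/seteqP; split => x.
- move=> [Cx Hx]; split => // l Ll; apply: Hx; split; first by case: HL => LC _; apply: LC.
  move=> s [Cs Hs]; apply: (Sym HC HL _ Cs Hs _ Ll).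
- move=> [Cx Hx]; split => // s [Cs Hs].
  apply: (Sym HC HM _ Cs Hs); by split.
Qed.

Lemma ideal_inter {C K J : set B} : ideal_of mul C K -> ideal_of mul C J ->
  ideal_of mul C (K `&` J).
Proof.
move=> [KC [[cK [K0 [KD KZ]]] [Kl Kr]]] [JC [[cJ [J0 [JD JZ]]] [Jl Jr]]].
split; first by move=> x [/KC].
split; first split; first exact: closedI.
- split; first by split.
  split; first by move=> x y [? ?] [? ?]; split; [apply: KD|apply: JD].
  by move=> a x [? ?]; split; [apply: KZ|apply: JZ].
split.
- by move=> c x Cc [? ?]; split; [apply: Kl|apply: Jl].
- by move=> c x Cc [? ?]; split; [apply: Kr|apply: Jr].
Qed.

Lemma restrict_ideal {A K : set B} : cstar_subalgebra mul star A -> ideal_of mul setT K ->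
  ideal_of mul A (K `&` A) /\ normalizer_invariant mul star A (K `&` A).
Proof.
move=> [[cA [A0 [AD AZ]]] [Amul Astar]] [_ [[cK [K0 [KD KZ]]] [Kl Kr]]].
split.
- split; first by move=> x [].
  split; first split; first exact: closedI.
    split; first by split.
    split; first by move=> x y [? ?] [? ?]; split; [apply: KD|apply: AD].
    by move=> a x [? ?]; split; [apply: KZ|apply: AZ].
  split.
  + by move=> c x Cc [? ?]; split; [apply: Kl|apply: Amul].
  + by move=> c x Cc [? ?]; split; [apply: Kr|apply: Amul].
- move=> n Hn x [Kx Ax]; split; first by apply: Kr => //; apply: Kl.
  exact: (Hn x Ax).2.
Qed.

Lemma iip_zero {A K : set B} : ideal_intersection_property mul A -> A 0 ->
  ideal_of mul setT K -> (forall y, K y -> A y -> y = 0) ->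
  forall y, K y -> y = 0.
Proof.
move=> Hiip A0 HK H y Ky.
case: (pselect (K = [set 0])) => [E|NE]; first by move: Ky; rewrite E.
exfalso; apply: (Hiip K HK NE).
apply/seteqP; split => u.
  by move=> [Ku Au]; apply: H.
move=> /= ->; split => //.
by case: HK => _ [[_ []]].
Qed.

Lemma core {A K : set B} : cstar_subalgebra mul star A ->
  closure (lin_span (normalizer mul star A)) = setT ->
  ideal_intersection_property mul A ->
  ideal_of mul setT K -> forall z k, Ann mul setT (K `&` A) z -> K k ->
  mul z k = 0 /\ mul k z = 0.
Proof.
move=> HA Hden Hiip HK z k Hz Kk.
have [HI Hinv] := restrict_ideal HA HK.
have HK2 := AnnB_ideal HA Hden HI Hinv.
have A0 : A 0 by case: HA => [[_ []]].
have Z : forall y, (Ann mul setT (K `&` A) `&` K) y -> y = 0.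
  apply: (iip_zero Hiip A0); first exact: ideal_inter.
  move=> y [Hy Ky] Ay.
  apply: (inter_Ann_zero (C := setT) (L := K `&` A)) => //.
  case: HA => _ [Amul Astar]; case: HK => _ [_ [Kl _]].
  by split; [apply: Kl | apply: Amul => //; apply: Astar].
case: HK2 => _ [_ [K2l K2r]]; case: HK => _ [_ [Kl Kr]].
split; apply: Z; split.
- exact: K2r.
- exact: Kl.
- exact: K2l.
- exact: Kr.
Qed.

End CStar.
Arguments core {R B mul star} HB {A K}.
Arguments restrict_ideal {R B mul star A K}.
Arguments AnnB_ideal {R B mul star} HB {A I}.
Arguments Ann_anti {R B mul C S1 S2}.
Arguments Ann_lideal_ideal {R B mul star} HB {C L}.
Arguments setT_sub {R B mul star}.
Arguments Ann3 {R B mul star} HB {C L}.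
Arguments Sym {R B mul star} HB {C L}.

Theorem corollary4p5 (R : realType) (B : completeNormedModType R[i])
    (mul : B -> B -> B) (star : B -> B) (A : set B)
    (HB : is_cstar_algebra mul star)
    (HA : cstar_subalgebra mul star A)
    (Hreg : regular_subalgebra mul star A)
    (Hiip : ideal_intersection_property mul A) :
  let alpha := fun J : set B => J `&` A in
  let beta := fun I : set B => Ann mul setT (Ann mul setT I) in
  (* alpha is well defined: R(B) -> R'_inv(A) *)
  (forall J, regular_ideal mul setT J ->
     regular_ideal mul A (alpha J) /\ normalizer_invariant mul star A (alpha J)) /\
  (* beta is well defined: R'_inv(A) -> R(B) *)
  (forall I, regular_ideal mul A I -> normalizer_invariant mul star A I ->
     regular_ideal mul setT (beta I)) /\
  (* beta o alpha = id and alpha o beta = id *)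
  (forall J, regular_ideal mul setT J -> beta (alpha J) = J) /\
  (forall I, regular_ideal mul A I -> normalizer_invariant mul star A I ->
     alpha (beta I) = I) /\
  (* both are inclusion preserving *)
  (forall J1 J2, regular_ideal mul setT J1 -> regular_ideal mul setT J2 ->
     J1 `<=` J2 -> alpha J1 `<=` alpha J2) /\
  (forall I1 I2, regular_ideal mul A I1 -> normalizer_invariant mul star A I1 ->
     regular_ideal mul A I2 -> normalizer_invariant mul star A I2 ->
     I1 `<=` I2 -> beta I1 `<=` beta I2).
Proof.
move=> alpha beta; rewrite /alpha /beta; case: Hreg => Hden _.
have core' := core HB HA Hden Hiip.
split.
  move=> J [HJ HJreg]; have [HI Hinv] := restrict_ideal HA HJ.
  split => //; split => //.
  have HK := AnnB_ideal HB HA Hden HI Hinv.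
  apply/seteqP; split => z.
  - move=> [Az Hz]; split => //; rewrite -HJreg; split => // s Hs.
    have Ks : Ann mul setT (J `&` A) s.
      by apply: (Ann_anti (S2 := J)) => // x [].
    apply: (core' _ HK z s _ Ks).1.
    split => // u [Ku Au]; apply: Hz; split => //; exact: Ku.2.
  - move=> Jz; split; first exact: Jz.2.
    move=> s [As Hs].
    by apply: (core' _ HJ s z _ Jz.1).2; split.
split.
  move=> I [HI HIreg] Hinv.
  have HL := AnnB_ideal HB HA Hden HI Hinv.
  split.
    apply: (Ann_lideal_ideal HB setT_sub).
    by case: HL => _ [_ [Ll _]].
  exact: (Ann3 HB setT_sub HL).
split.
  move=> J [HJ HJreg]; apply/seteqP; split => z.
  - move=> [_ Hz]; rewrite -HJreg; split => // s Hs; apply: Hz.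
    by apply: (Ann_anti (S2 := J)) => // x [].
  - move=> Jz; split => // s Hs.
    exact: (core' _ HJ s z Hs Jz).2.
split.
  move=> I [HI HIreg] Hinv; apply/seteqP; split => z.
  - move=> [[_ Hz] Az]; rewrite -HIreg; split => // s [As Hs].
    by apply: Hz; split.
  - move=> Iz; have Az : A z by case: HI => IA _; apply: IA.
    split => //; split => // y Hy.
    have HL := AnnB_ideal HB HA Hden HI Hinv.
    apply: (core' _ HL z y _ Hy).1.
    split => // s [Ls As].
    by apply: (Sym HB HA HI _ As) => // l Il; case: Ls => _; apply.
split.
  by move=> J1 J2 _ _ sub z [J1z Az]; split => //; apply: sub.
move=> I1 I2 _ _ _ _ sub.
by apply: Ann_anti; apply: Ann_anti.
Qed.
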